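(* Let $V$ be a $K$-vector space and $A=\mathrm{Tricub}(V)$ the free cubical trialgebra on $V$. Consider the chain complex $$C^{\mathrm{Tricub}}_n(A)=K[Q_{n-1}]\otimes A^{\otimes n}\quad(n\ge1),\qquad d=\sum_{i=1}^{n-1}(-1)^i d_i,$$ where, for $X=(X_1,\dots,X_{n-1})\in Q_{n-1}$, $$d_i(X;a_1,\dots,a_n)=(d_i(X);a_1,\dots,a_i\circ_i^X a_{i+1},\dots,a_n).$$ Here $d_i(X)\in Q_{n-2}$ is obtained by deleting the coordinate $X_i$, and $\circ_i^X$ is $\dashv$, $\perp$ or $\vdash$ according as $X_i=-1$, $0$ or $+1$. Then the homology of this complex is $V$ in degree $1$ and $0$ in all degrees $\ge2$.
   Context: A cubical trialgebra is a $K$-vector space $A$ with three bilinear operations $\dashv,\vdash,\perp$ satisfying the nine relations $(x\circ_1y)\circ_2z=x\circ_1(y\circ_2z)$ for all $\circ_1,\circ_2\in\{\dashv,\vdash,\perp\}$. $\mathrm{Tricub}(V)$ denotes the free cubical trialgebra on $V$. $Q_m=\{-1,0,+1\}^m$, and $K[Q_m]$ is the vector space with basis $Q_m$. *)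

(* Defs.v *)
From HB Require Import structures.
From mathcomp Require Import all_boot all_order all_algebra.
Set Implicit Arguments. Unset Strict Implicit. Unset Printing Implicit Defensive.
Import GRing.Theory.
Local Open Scope ring_scope.

(* The three coordinate values of Q_m = {-1,0,+1}^m.
   CLeft = -1 (operation -|), CMid = 0 (operation _|_), CRight = +1 (operation |-). *)
Inductive cube3 := CLeft | CMid | CRight.

Section Tricub.
Variable K : fieldType.

Definition bilinear_ops (A : lmodType K) (op : cube3 -> A -> A -> A) : Prop :=
  (forall o (c : K) x y z, op o (c *: x + y) z = c *: op o x z + op o y z) /\
  (forall o (c : K) x y z, op o z (c *: x + y) = c *: op o z x + op o z y).

Definition cubical_trialgebra (A : lmodType K) (op : cube3 -> A -> A -> A) : Prop :=
  bilinear_ops op /\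
  forall o1 o2 (x y z : A), op o2 (op o1 x y) z = op o1 x (op o2 y z).

Definition klinear (U W : lmodType K) (f : U -> W) : Prop :=
  forall (c : K) x y, f (c *: x + y) = c *: f x + f y.

Definition trialg_morphism (A B : lmodType K) (opA : cube3 -> A -> A -> A)
  (opB : cube3 -> B -> B -> B) (g : A -> B) : Prop :=
  klinear g /\ forall o x y, g (opA o x y) = opB o (g x) (g y).

Definition is_free_tricub (V A : lmodType K) (opA : cube3 -> A -> A -> A)
  (iota : V -> A) : Prop :=
  cubical_trialgebra opA /\ klinear iota /\
  forall (B : lmodType K) (opB : cube3 -> B -> B -> B),
    cubical_trialgebra opB -> forall f : V -> B, klinear f ->
    exists g : A -> B,
      trialg_morphism opA opB g /\ (forall v, g (iota v) = f v) /\
      forall g' : A -> B, trialg_morphism opA opB g' ->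
        (forall v, g' (iota v) = f v) -> forall a, g' a = g a.

(* An element of C_n is represented by a formal finite sum of
   coefficients times generators (X; a_1,...,a_n), X in Q_{n-1}. *)
Definition fsum (A : lmodType K) := seq (K * (seq cube3 * seq A)).

Definition wf_fsum (A : lmodType K) (n : nat) (s : fsum A) : bool :=
  all (fun t => (size t.2.1 == n.-1) && (size t.2.2 == n)) s.

Definition multilinear_n (A W : lmodType K) (n : nat)
  (phi : seq cube3 -> seq A -> W) : Prop :=
  forall X (l r : seq A) (c : K) (x y : A),
    size X = n.-1 -> (size l + size r).+1 = n ->
    phi X (l ++ (c *: x + y) :: r) =
      c *: phi X (l ++ x :: r) + phi X (l ++ y :: r).

Definition eval_fsum (A W : lmodType K) (phi : seq cube3 -> seq A -> W)
  (s : fsum A) : W :=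
  \sum_(t <- s) t.1 *: phi t.2.1 t.2.2.

(* A formal sum represents 0 in K[Q_{n-1}] (x) A^{(x) n} iff it is killed by
   every linear map out of the tensor product, i.e. by every map multilinear
   in the A-arguments (universal property of the tensor product). *)
Definition tensor_zero (A : lmodType K) (n : nat) (s : fsum A) : Prop :=
  forall (W : lmodType K) (phi : seq cube3 -> seq A -> W),
    multilinear_n n phi -> eval_fsum phi s = 0.

Definition del_at (T : Type) (s : seq T) (j : nat) : seq T :=
  take j s ++ drop j.+1 s.

(* face i = j.+1 (0-based j): delete X_i and replace a_i, a_{i+1} by
   a_i o_i^X a_{i+1} *)
Definition face (A : lmodType K) (op : cube3 -> A -> A -> A)
  (j : nat) (X : seq cube3) (a : seq A) : seq cube3 * seq A :=
  (del_at X j,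
   take j a ++ op (nth CMid X j) (nth 0 a j) (nth 0 a j.+1) :: drop j.+2 a).

Definition dterm (A : lmodType K) (op : cube3 -> A -> A -> A) (n : nat)
  (t : K * (seq cube3 * seq A)) : fsum A :=
  [seq ((-1) ^+ j.+1 * t.1, face op j t.2.1 t.2.2) | j <- iota 0 n.-1].

Definition dfsum (A : lmodType K) (op : cube3 -> A -> A -> A) (n : nat)
  (s : fsum A) : fsum A := flatten (map (dterm op n) s).

Definition fneg (A : lmodType K) (s : fsum A) : fsum A :=
  [seq (- t.1, t.2) | t <- s].

Definition gen1 (A : lmodType K) (a : A) : fsum A := [:: (1, ([::], [:: a]))].

End Tricub.

(* Main.v *)
Require Import Defs.
From mathcomp Require Import all_boot all_order all_algebra.
Import GRing.Theory.
From HB Require Import structures.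
From mathcomp Require Import all_boot all_order all_algebra.
From mathcomp Require Import boolp.
From mathcomp Require Import zify.
From Stdlib Require Import ProofIrrelevance FunctionalExtensionality ClassicalEpsilon.
Set Implicit Arguments. Unset Strict Implicit. Unset Printing Implicit Defensive.
Import GRing.Theory.
Local Open Scope ring_scope.

Section SubP.
Variables (K : fieldType) (M : lmodType K) (P : M -> Prop).
Hypothesis P0 : P 0.
Hypothesis PL : forall c x y, P x -> P y -> P (c *: x + y).

Record SubT := MkSub { sv : M; svP : P sv }.
Lemma SubT_eq (x y : SubT) : sv x = sv y -> x = y.
Proof.
case: x => x xP; case: y => y yP /= e; subst.
by rewrite (proof_irrelevance _ xP yP).
Qed.
HB.instance Definition _ := gen_eqMixin SubT.
HB.instance Definition _ := gen_choiceMixin SubT.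
Lemma PD x y : P x -> P y -> P (x + y).
Proof. by move=> px py; have := PL 1 px py; rewrite scale1r. Qed.
Lemma PN x : P x -> P (- x).
Proof. by move=> px; have := PL (-1) px P0; rewrite addr0 scaleN1r. Qed.
Lemma PZ c x : P x -> P (c *: x).
Proof. by move=> px; have := PL c px P0; rewrite addr0. Qed.
Definition Szero := MkSub P0.
Definition Sadd x y := MkSub (PD (svP x) (svP y)).
Definition Sopp x := MkSub (PN (svP x)).
Definition Sscale c x := MkSub (PZ c (svP x)).
Lemma SaddA : associative Sadd.
Proof. by move=> x y z; apply: SubT_eq => /=; rewrite addrA. Qed.
Lemma SaddC : commutative Sadd.
Proof. by move=> x y; apply: SubT_eq => /=; rewrite addrC. Qed.
Lemma Sadd0 : left_id Szero Sadd.
Proof. by move=> x; apply: SubT_eq => /=; rewrite add0r. Qed.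
Lemma SaddN : left_inverse Szero Sopp Sadd.
Proof. by move=> x; apply: SubT_eq => /=; rewrite addNr. Qed.
Lemma SscaleA a b v : Sscale a (Sscale b v) = Sscale (a * b) v.
Proof. by apply: SubT_eq => /=; rewrite scalerA. Qed.
Lemma Sscale1 : left_id 1 Sscale.
Proof. by move=> x; apply: SubT_eq => /=; rewrite scale1r. Qed.
Lemma SscaleDr a x y : Sscale a (Sadd x y) = Sadd (Sscale a x) (Sscale a y).
Proof. by apply: SubT_eq => /=; rewrite scalerDr. Qed.
Lemma SscaleDl v a b : Sscale (a + b) v = Sadd (Sscale a v) (Sscale b v).
Proof. by apply: SubT_eq => /=; rewrite scalerDl. Qed.
End SubP.

Section BT.
Variables (K : fieldType) (A W : lmodType K).

Record Bt := MkB { b1 : A; b2 : cube3 -> A -> W;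
  b2l : forall o, klinear (b2 o); b3 : W }.

Lemma Bt_eq (x y : Bt) : b1 x = b1 y -> (forall o z, b2 x o z = b2 y o z) -> b3 x = b3 y -> x = y.
Proof.
case: x => x1 x2 xl x3; case: y => y1 y2 yl y3 /= e1 e2 e3; subst.
have e : x2 = y2 by apply: functional_extensionality => o; apply: functional_extensionality => z; exact: e2.
subst. by rewrite (proof_irrelevance _ xl yl).
Qed.

HB.instance Definition _ := gen_eqMixin Bt.
HB.instance Definition _ := gen_choiceMixin Bt.

Lemma zero_lin : klinear (fun _ : A => (0 : W)).
Proof. by move=> c x y; rewrite scaler0 addr0. Qed.
Definition Bzero := MkB 0 (fun _ : cube3 => zero_lin) 0.
Lemma add_lin (x y : Bt) o : klinear (fun z => b2 x o z + b2 y o z).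
Proof. by move=> c u v; rewrite (b2l x) (b2l y) scalerDr addrACA. Qed.
Definition Badd x y := MkB (b1 x + b1 y) (add_lin x y) (b3 x + b3 y).
Lemma opp_lin (x : Bt) o : klinear (fun z => - b2 x o z).
Proof. by move=> c u v; rewrite (b2l x) opprD scalerN. Qed.
Definition Bopp x := MkB (- b1 x) (opp_lin x) (- b3 x).
Lemma scale_lin (a : K) (x : Bt) o : klinear (fun z => a *: b2 x o z).
Proof. by move=> c u v; rewrite (b2l x) scalerDr !scalerA mulrC. Qed.
Definition Bscale a x := MkB (a *: b1 x) (scale_lin a x) (a *: b3 x).

Lemma BaddA : associative Badd.
Proof. by move=> x y z; apply: Bt_eq => /= *; rewrite addrA. Qed.
Lemma BaddC : commutative Badd.
Proof. by move=> x y; apply: Bt_eq => /= *; rewrite addrC. Qed.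
Lemma Badd0 : left_id Bzero Badd.
Proof. by move=> x; apply: Bt_eq => /= *; rewrite add0r. Qed.
Lemma BaddN : left_inverse Bzero Bopp Badd.
Proof. by move=> x; apply: Bt_eq => /= *; rewrite addNr. Qed.
HB.instance Definition _ := GRing.isZmodule.Build Bt BaddA BaddC Badd0 BaddN.
Lemma BscaleA a b v : Bscale a (Bscale b v) = Bscale (a * b) v.
Proof. by apply: Bt_eq => /= *; rewrite scalerA. Qed.
Lemma Bscale1 : left_id 1 Bscale.
Proof. by move=> x; apply: Bt_eq => /= *; rewrite scale1r. Qed.
Lemma BscaleDr : right_distributive Bscale +%R.
Proof. by move=> a x y; apply: Bt_eq => /= *; rewrite scalerDr. Qed.
Lemma BscaleDl v : {morph Bscale^~ v: a b / a + b}.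
Proof. by move=> a b; apply: Bt_eq => /= *; rewrite scalerDl. Qed.
HB.instance Definition _ := GRing.Zmodule_isLmodule.Build K Bt BscaleA Bscale1 BscaleDr BscaleDl.
End BT.

Section Free.
Variables (K : fieldType) (V A : lmodType K) (op : cube3 -> A -> A -> A) (iota : V -> A).
Hypothesis Hfree : is_free_tricub op iota.

Lemma Hcub : cubical_trialgebra op. Proof. by case: Hfree. Qed.
Lemma iota_lin : klinear iota. Proof. by case: Hfree => _ []. Qed.
Lemma opL o (c : K) x y z : op o (c *: x + y) z = c *: op o x z + op o y z.
Proof. by case: Hcub => [[h _] _]; apply: h. Qed.
Lemma opR o (c : K) x y z : op o z (c *: x + y) = c *: op o z x + op o z y.
Proof. by case: Hcub => [[_ h] _]; apply: h. Qed.
Lemma opA o1 o2 x y z : op o2 (op o1 x y) z = op o1 x (op o2 y z).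
Proof. by case: Hcub => _ h; apply: h. Qed.

Lemma klin0 (U U' : lmodType K) (f : U -> U') : klinear f -> f 0 = 0.
Proof. by move=> h; have e := h 1 0 0; rewrite !scale1r addr0 in e; apply: (addrI (f 0)); rewrite addr0 -e. Qed.
Lemma klinD (U U' : lmodType K) (f : U -> U') : klinear f -> forall x y, f (x + y) = f x + f y.
Proof. by move=> h x y; have := h 1 x y; rewrite !scale1r. Qed.
Lemma klinZ (U U' : lmodType K) (f : U -> U') : klinear f -> forall c x, f (c *: x) = c *: f x.
Proof. by move=> h c x; have := h c x 0; rewrite addr0 (klin0 h) addr0. Qed.
Lemma klinN (U U' : lmodType K) (f : U -> U') : klinear f -> forall x, f (- x) = - f x.
Proof. by move=> h x; rewrite -scaleN1r klinZ // scaleN1r. Qed.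
Lemma klin_sum (U U' : lmodType K) (f : U -> U') (I : Type) (s : seq I) (F : I -> U) :
  klinear f -> f (\sum_(i <- s) F i) = \sum_(i <- s) f (F i).
Proof.
move=> h; elim: s => [|i s IH]; first by rewrite !big_nil klin0.
by rewrite !big_cons klinD // IH.
Qed.
Lemma opl_lin o z : klinear (fun x => op o x z).
Proof. by move=> c x y; apply: opL. Qed.
Lemma opr_lin o z : klinear (op o z).
Proof. by move=> c x y; apply: opR. Qed.

Lemma uniq_id (h : A -> A) : trialg_morphism op op h -> (forall v, h (iota v) = iota v) ->
  forall a, h a = a.
Proof.
move=> hm hv a.
case: Hfree => _ [il U].
have [g0 [_ [_ Hu]]] := U A op Hcub iota il.
rewrite (Hu h hm hv a).
have idm : trialg_morphism op op id by split.
by rewrite -(Hu id idm (fun v => erefl)).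
Qed.

Definition Sgen (a : A) : Prop := exists (v0 : V) (l : seq (cube3 * V * A)),
  a = iota v0 + \sum_(t <- l) op t.1.1 (iota t.1.2) t.2.

Lemma Sgen0 : Sgen 0.
Proof. by exists 0, [::]; rewrite big_nil addr0 (klin0 iota_lin). Qed.

Lemma Sgen_lin c x y : Sgen x -> Sgen y -> Sgen (c *: x + y).
Proof.
move=> [v [l ->]] [v' [l' ->]].
exists (c *: v + v'), ([seq (t.1.1, c *: t.1.2, t.2) | t <- l] ++ l').
rewrite iota_lin big_cat big_map /= scalerDr.
rewrite scaler_sumr.
under [X in _ = _ + (X + _)]eq_bigr => t _ do rewrite (klinZ iota_lin) (klinZ (opl_lin _ _)).
by rewrite addrACA.
Qed.

Lemma Sgen_op o x b : Sgen x -> Sgen (op o x b).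
Proof.
move=> [v [l ->]].
exists 0, ((o, v, b) :: [seq (t.1.1, t.1.2, op o t.2 b) | t <- l]).
rewrite (klin0 iota_lin) add0r big_cons big_map /= (klinD (opl_lin _ _)).
rewrite (klin_sum _ _ (opl_lin _ _)); congr (_ + _).
by apply: eq_bigr => t _; rewrite opA.
Qed.

Definition SA := SubT Sgen.
HB.instance Definition _ := Choice.on SA.
HB.instance Definition _ := GRing.isZmodule.Build SA (SaddA Sgen_lin) (SaddC Sgen_lin) (Sadd0 Sgen0 Sgen_lin) (SaddN Sgen0 Sgen_lin).
HB.instance Definition _ := GRing.Zmodule_isLmodule.Build K SA (SscaleA Sgen0 Sgen_lin) (Sscale1 Sgen0 Sgen_lin) (SscaleDr Sgen0 Sgen_lin) (SscaleDl Sgen0 Sgen_lin).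
Definition opS o (x y : SA) : SA := MkSub (Sgen_op o (sv y) (svP x)).

Lemma SA_cub : cubical_trialgebra opS.
Proof.
split; first split.
- by move=> o c x y z; apply: SubT_eq => /=; rewrite opL.
- by move=> o c x y z; apply: SubT_eq => /=; rewrite opR.
- by move=> o1 o2 x y z; apply: SubT_eq => /=; rewrite opA.
Qed.

Lemma iota_Sgen v : Sgen (iota v).
Proof. by exists v, [::]; rewrite big_nil addr0. Qed.

Lemma gen a : Sgen a.
Proof.
case: Hfree => _ [il U].
pose f (v : V) : SA := MkSub (iota_Sgen v).
have fl : klinear f by move=> c x y; apply: SubT_eq => /=; rewrite il.
have [g [[gl gm] [gv _]]] := U _ opS SA_cub f fl.
have -> : a = sv (g a).
  symmetry; apply: (uniq_id (h := fun b => sv (g b))) => [|v]; last by rewrite gv.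
  split; first by move=> c x y; rewrite gl.
  by move=> o x y; rewrite gm.
exact: svP.
Qed.

Definition opV (o : cube3) (x y : V) : V := 0.
Lemma V_cub : cubical_trialgebra opV.
Proof. by split; first split => *; rewrite /opV ?scaler0 ?addr0. Qed.

Lemma proj_ex : exists pi : A -> V, klinear pi /\ (forall v, pi (iota v) = v) /\
  (forall o x y, pi (op o x y) = 0).
Proof.
case: Hfree => _ [il U].
have idl : klinear (@id V) by [].
have [g [[gl gm] [gv _]]] := U _ opV V_cub id idl.
by exists g; split; [|split]; [| |move=> *; rewrite gm].
Qed.

Section HG.
Variables (W : lmodType K) (G : cube3 -> V -> A -> W).
Hypothesis GlV : forall o w, klinear (fun v => G o v w).
Hypothesis GlA : forall o v, klinear (G o v).

Definition opB o (x y : Bt A W) : Bt A W :=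
  @MkB K A W (op o (b1 x) (b1 y)) (fun p z => b2 x o (op p (b1 y) z))
    (fun p c u u' => etrans (f_equal (b2 x o) (opR p c u u' (b1 y))) (b2l x o c _ _))
    (b2 x o (b1 y)).

Lemma B_cub : cubical_trialgebra opB.
Proof.
split; first split.
- move=> o c x y z; apply: Bt_eq => /=; first by rewrite opL.
  + by move=> *.
  + by [].
- move=> o c x y z; apply: Bt_eq => /=; first by rewrite opR.
  + by move=> p u; rewrite opL (b2l z).
  + by rewrite (b2l z).
- move=> o1 o2 x y z; apply: Bt_eq => /=; first by rewrite opA.
  + by move=> p u; rewrite opA.
  + by [].
Qed.

Lemma H_ex : exists H : A -> W, klinear H /\ (forall v, H (iota v) = 0) /\
  (forall o v w, H (op o (iota v) w) = G o v w).
Proof.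
case: Hfree => _ [il U].
pose f (v : V) : Bt A W := @MkB K A W (iota v) (fun p z => G p v z) (fun p => GlA p v) 0.
have fl : klinear f.
  move=> c x y; apply: Bt_eq => /=; first by rewrite il.
  + by move=> p z; rewrite (GlV p z).
  + by rewrite scaler0 addr0.
have [g [[gl gm] [gv _]]] := U _ opB B_cub f fl.
have g1 : forall a, b1 (g a) = a.
  apply: uniq_id => [|v]; last by rewrite gv.
  split; first by move=> c x y; rewrite gl.
  by move=> o x y; rewrite gm.
exists (fun a => b3 (g a)); split; [|split].
- by move=> c x y; rewrite gl.
- by move=> v; rewrite gv.
- by move=> o v w; rewrite gm /= gv /= g1.
Qed.
End HG.


Section Sel.
Variables (W : lmodType K).

Definition Hspec (G : cube3 -> V -> A -> W) (H : A -> W) : Prop :=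
  klinear H /\ (forall v, H (iota v) = 0) /\ (forall o v w, H (op o (iota v) w) = G o v w).

Definition Hsel (G : cube3 -> V -> A -> W) : A -> W :=
  epsilon (inhabits (fun _ => 0)) (Hspec G).

Lemma Hsel_spec G : (forall o w, klinear (fun v => G o v w)) -> (forall o v, klinear (G o v)) ->
  Hspec G (Hsel G).
Proof.
move=> h1 h2; apply: epsilon_spec.
have [H HH] := H_ex h1 h2; by exists H.
Qed.

Lemma Hsel_eval G v0 l a : (forall o w, klinear (fun v => G o v w)) -> (forall o v, klinear (G o v)) ->
  a = iota v0 + \sum_(t <- l) op t.1.1 (iota t.1.2) t.2 ->
  Hsel G a = \sum_(t <- l) G t.1.1 t.1.2 t.2.
Proof.
move=> h1 h2 ->; have [hl [h0 hp]] := Hsel_spec h1 h2.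
rewrite (klinD hl) h0 add0r (klin_sum _ _ hl).
by apply: eq_bigr => t _; rewrite hp.
Qed.
End Sel.

Definition dspec (a : A) (d : V * seq (cube3 * V * A)) : Prop :=
  a = iota d.1 + \sum_(t <- d.2) op t.1.1 (iota t.1.2) t.2.
Definition dec (a : A) := epsilon (inhabits (0, [::])) (dspec a).
Lemma dec_spec a : a = iota (dec a).1 + \sum_(t <- (dec a).2) op t.1.1 (iota t.1.2) t.2.
Proof.
have : dspec a (dec a).
  apply: epsilon_spec; have [v [l e]] := gen a; by exists (v, l).
by [].
Qed.

Lemma op_dec o a1 a2 v0 l : a1 = iota v0 + \sum_(t <- l) op t.1.1 (iota t.1.2) t.2 ->
  op o a1 a2 = iota 0 + \sum_(t <- (o, v0, a2) :: [seq (t.1.1, t.1.2, op o t.2 a2) | t <- l])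
     op t.1.1 (iota t.1.2) t.2.
Proof.
move=> ->.
rewrite (klin0 iota_lin) add0r big_cons big_map /= (klinD (opl_lin _ _)).
rewrite (klin_sum _ _ (opl_lin _ _)); congr (_ + _).
by apply: eq_bigr => t _; rewrite opA.
Qed.

Lemma face0 o X x y r : face op 0 (o :: X) (x :: y :: r) = (X, op o x y :: r).
Proof. by rewrite /face /del_at /= !drop0. Qed.
Lemma faceS j o X b a : face op j.+1 (o :: X) (b :: a) =
  (o :: (face op j X a).1, b :: (face op j X a).2).
Proof. by []. Qed.
Lemma size_face1 j X a : (j < size X)%N -> size (face op j X a).1 = (size X).-1.
Proof. move=> h; rewrite /= /del_at size_cat size_take size_drop h; lia. Qed.
Lemma size_face2 j X a : (j.+1 < size a)%N -> size (face op j X a).2 = (size a).-1.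
Proof. move=> h; rewrite /= size_cat size_take /= size_drop; case: ifP; lia. Qed.

Lemma iota_succ k m : seq.iota k.+1 m = map succn (seq.iota k m).
Proof. by elim: m k => //= m IH k; rewrite IH. Qed.

Lemma sum_iota_rec (W : zmodType) k (F : nat -> W) :
  \sum_(j <- seq.iota 0 k.+1) F j = F 0%N + \sum_(j <- seq.iota 0 k) F j.+1.
Proof. by rewrite /= big_cons iota_succ big_map. Qed.

Section Eval.
Variables (W : lmodType K) (phi : seq cube3 -> seq A -> W).

Definition D (m : nat) (X : seq cube3) (a : seq A) : W :=
  \sum_(j <- seq.iota 0 m.-1) ((-1) ^+ j.+1) *: phi (face op j X a).1 (face op j X a).2.

Lemma eval_cat s1 s2 : eval_fsum phi (s1 ++ s2) = eval_fsum phi s1 + eval_fsum phi s2.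
Proof. by rewrite /eval_fsum big_cat. Qed.
Lemma eval_fneg s : eval_fsum phi (fneg s) = - eval_fsum phi s.
Proof. by rewrite /eval_fsum big_map -sumrN; apply: eq_bigr => t _; rewrite scaleNr. Qed.
Lemma eval_flatten (T : Type) (f : T -> fsum A) s :
  eval_fsum phi (flatten (map f s)) = \sum_(t <- s) eval_fsum phi (f t).
Proof. by rewrite /eval_fsum big_flatten big_map. Qed.
Lemma eval_dterm m t : eval_fsum phi (dterm op m t) = t.1 *: D m t.2.1 t.2.2.
Proof.
rewrite /eval_fsum /dterm big_map /D scaler_sumr; apply: eq_bigr => j _ /=.
by rewrite scalerA mulrC.
Qed.
Lemma eval_dfsum m s : eval_fsum phi (dfsum op m s) = \sum_(t <- s) t.1 *: D m t.2.1 t.2.2.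
Proof. by rewrite /dfsum eval_flatten; apply: eq_bigr => t _; rewrite eval_dterm. Qed.

Lemma D_rec k X a : D k.+2 X a = - phi (face op 0 X a).1 (face op 0 X a).2 +
  \sum_(j <- seq.iota 0 k) ((-1) ^+ j.+2) *: phi (face op j.+1 X a).1 (face op j.+1 X a).2.
Proof. by rewrite /D /= sum_iota_rec expr1 scaleN1r. Qed.
End Eval.

Section PsiS.
Variables (W : lmodType K) (phi : seq cube3 -> seq A -> W) (n : nat).
Hypothesis Hml : multilinear_n n phi.
Hypothesis Hn : (2 <= n)%N.

Definition Gf (Z : seq cube3) (br : seq A) : cube3 -> V -> A -> W :=
  fun o v w => - phi (o :: Z) (iota v :: w :: br).
Definition Psi (Z : seq cube3) (b : seq A) : W :=
  match b with b1 :: br => Hsel (Gf Z br) b1 | [::] => 0 end.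

Lemma phi_lin0 X r : size X = n.-1 -> (size r).+1 = n -> klinear (fun x => phi X (x :: r)).
Proof. by move=> h1 h2 c x y; apply: (Hml (l := [::])). Qed.

Lemma Gf_linV Z br : size Z = n.-2 -> size br = n.-2 -> forall o w, klinear (fun v => Gf Z br o v w).
Proof.
move=> h1 h2 o w c v v'; rewrite /Gf iota_lin (phi_lin0 (X := o :: Z) (r := w :: br)) /=;
  last (by rewrite h2; lia); last (by rewrite h1; lia).
by rewrite opprD scalerN.
Qed.
Lemma Gf_linA Z br : size Z = n.-2 -> size br = n.-2 -> forall o v, klinear (Gf Z br o v).
Proof.
move=> h1 h2 o v c w w'; rewrite /Gf.
rewrite (Hml (X := o :: Z) (l := [:: iota v]) (r := br)) /=; last (by rewrite h2; lia); last (by rewrite h1; lia).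
by rewrite opprD scalerN.
Qed.

Lemma Psi_ml : multilinear_n n.-1 Psi.
Proof.
move=> X l r c x y hX hs; case: l hs => [|b l'] hs /=.
- have sX : size X = n.-2 by lia.
  have sr : size r = n.-2 by move: hs => /=; lia.
  have [hl _] := Hsel_spec (Gf_linV sX sr) (Gf_linA sX sr).
  by apply: hl.
- rewrite /= in hs; have sX : size X = n.-2 by lia.
  have sr : forall z, size (l' ++ z :: r) = n.-2 by move=> z; rewrite size_cat /=; lia.
  rewrite !(Hsel_eval (Gf_linV sX (sr _)) (Gf_linA sX (sr _)) (dec_spec b)).
  rewrite scaler_sumr -big_split /=; apply: eq_bigr => t _.
  rewrite /Gf.
  rewrite (Hml (X := t.1.1 :: X) (l := iota t.1.2 :: t.2 :: l') (r := r)) /=; last (by lia); last (by lia).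
  by rewrite opprD scalerN.
Qed.

Lemma core X a : size X = n.-1 -> size a = n ->
  phi X a + \sum_(s <- (dec (head 0 a)).2)
      D phi n.+1 (s.1.1 :: X) (iota s.1.2 :: s.2 :: behead a) = D Psi n X a.
Proof.
move=> sX sa.
have [m em] : exists m, n = m.+2 by exists n.-2; lia.
rewrite em /= in sX sa *.
case: X sX => [|X0 Xr] //= sX; case: a sa => [|a1 [|a2 as']] //= sa.
have sXr : size Xr = m by lia.
have sas : size as' = m by lia.
set v0 := (dec a1).1; set l := (dec a1).2.
have ea1 : a1 = iota v0 + \sum_(t <- l) op t.1.1 (iota t.1.2) t.2 := dec_spec a1.
pose F1 j := (face op j Xr (a2 :: as')).1.
pose F2 j := (face op j Xr (a2 :: as')).2.
pose P0 := phi (X0 :: Xr) (iota v0 :: a2 :: as').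
pose Q (t : cube3 * V * A) := phi (X0 :: Xr) (op t.1.1 (iota t.1.2) t.2 :: a2 :: as').
pose R (t : cube3 * V * A) := phi (t.1.1 :: Xr) (iota t.1.2 :: op X0 t.2 a2 :: as').
pose S (t : cube3 * V * A) j := phi (t.1.1 :: X0 :: F1 j) (iota t.1.2 :: t.2 :: F2 j).
have L1 : phi (X0 :: Xr) (a1 :: a2 :: as') = P0 + \sum_(t <- l) Q t.
  have hl : klinear (fun x => phi (X0 :: Xr) (x :: a2 :: as')).
    by apply: phi_lin0 => /=; rewrite em; lia.
  by rewrite {1}ea1 (klinD hl) (klin_sum _ _ hl).
have L2 : forall t, D phi m.+3 (t.1.1 :: X0 :: Xr) (iota t.1.2 :: t.2 :: a2 :: as') =
    - Q t + (R t + \sum_(j <- seq.iota 0 m) (-1) ^+ j.+3 *: S t j).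
  move=> t; rewrite (D_rec _ m.+1) sum_iota_rec.
  rewrite expr2 mulN1r opprK scale1r.
  by congr (- _ + (_ + _)); rewrite faceS face0.
have L3 : D Psi m.+2 (X0 :: Xr) (a1 :: a2 :: as') =
    - Psi Xr (op X0 a1 a2 :: as') +
    \sum_(j <- seq.iota 0 m) (-1) ^+ j.+2 *: Psi (X0 :: F1 j) (a1 :: F2 j).
  by rewrite (D_rec _ m) face0.
have L4 : Psi Xr (op X0 a1 a2 :: as') = - P0 + \sum_(t <- l) - R t.
  have s1 : size Xr = n.-2 by rewrite em.
  have s2 : size as' = n.-2 by rewrite em.
  rewrite /= (Hsel_eval (Gf_linV s1 s2) (Gf_linA s1 s2) (op_dec X0 a2 ea1)).
  by rewrite big_cons big_map.
have L5 : forall j, j \in seq.iota 0 m -> Psi (X0 :: F1 j) (a1 :: F2 j) = \sum_(t <- l) - S t j.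
  move=> j; rewrite mem_iota add0n => /andP [_ hj].
  have s1 : size (X0 :: F1 j) = n.-2 by rewrite /= /F1 size_face1 sXr // em; lia.
  have s2 : size (F2 j) = n.-2 by rewrite /F2 size_face2 /= sas // em; lia.
  by rewrite /= (Hsel_eval (Gf_linV s1 s2) (Gf_linA s1 s2) ea1).
rewrite L1 L3 L4 big_seq_cond.
under [X in _ = _ + X]eq_bigr => j /andP [hj _] do rewrite (L5 j hj).
rewrite -big_seq_cond.
under eq_bigr => t _ do rewrite L2.
rewrite big_split /= big_split /= sumrN -!addrA addNKr.
rewrite opprD opprK sumrN opprK -addrA; congr (_ + (_ + _)).
under [RHS]eq_bigr => j _ do rewrite scaler_sumr.
rewrite exchange_big /=.
apply: eq_bigr => t _; apply: eq_bigr => j _.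
by rewrite exprS mulN1r scaleNr scalerN.
Qed.
End PsiS.
End Free.

Lemma sum_flatten_map (W : zmodType) (T U : Type) (f : T -> seq U) (F : U -> W) s :
  \sum_(u <- flatten (map f s)) F u = \sum_(t <- s) \sum_(u <- f t) F u.
Proof. by rewrite big_flatten big_map. Qed.

Lemma all_flatten_map (T U : Type) (Q : pred T) (P : pred U) (f : T -> seq U) s :
  all Q s -> (forall t, Q t -> all P (f t)) -> all P (flatten (map f s)).
Proof.
move=> hs h; elim: s hs => //= t s IH /andP [qt qs].
by rewrite all_cat h // IH.
Qed.

Lemma eq_big_all (W : zmodType) (T : Type) (Q : pred T) (F G : T -> W) s :
  all Q s -> (forall t, Q t -> F t = G t) -> \sum_(t <- s) F t = \sum_(t <- s) G t.
Proof.
move=> hs h; elim: s hs => [|t s IH]; first by rewrite !big_nil.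
by move=> /= /andP [qt qs]; rewrite !big_cons h // IH.
Qed.

Theorem theorem5p6 (K : fieldType) (V A : lmodType K)
  (op : cube3 -> A -> A -> A) (iota : V -> A) :
  is_free_tricub op iota ->
  ((forall x : fsum A, wf_fsum 1 x ->
      exists (v : V) (y : fsum A), wf_fsum 2 y /\
        tensor_zero 1 (x ++ fneg (gen1 (iota v)) ++ fneg (dfsum op 2 y))) /\
   (forall (v : V) (y : fsum A), wf_fsum 2 y ->
      tensor_zero 1 (gen1 (iota v) ++ fneg (dfsum op 2 y)) -> v = 0)) /\
  (forall n : nat, (2 <= n)%N -> forall x : fsum A, wf_fsum n x ->
      tensor_zero n.-1 (dfsum op n x) ->
      exists y : fsum A, wf_fsum n.+1 y /\
        tensor_zero n (x ++ fneg (dfsum op n.+1 y))).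
Proof.
move=> Hf; split; [split|].
- move=> x wx.
  pose dv (t : K * (seq cube3 * seq A)) := dec op iota (head 0 t.2.2).
  exists (\sum_(t <- x) t.1 *: (dv t).1).
  exists (flatten (map (fun t => [seq (- t.1, ([:: s.1.1], [:: iota s.1.2; s.2])) | s <- (dv t).2]) x)).
  split.
  + by apply: (all_flatten_map wx) => t _; elim: (dv t).2 => //= s l ->.
  + move=> W phi Hml.
    have hl : klinear (fun a => phi [::] [:: a]) by move=> c a b; apply: (Hml _ [::] [::]).
    have hl2 : klinear (fun v => phi [::] [:: iota v]) by move=> c u u'; rewrite (iota_lin Hf) hl.
    rewrite !eval_cat !eval_fneg eval_dfsum sum_flatten_map /eval_fsum big_cons big_nil /= addr0 scale1r.
    rewrite (klin_sum _ _ hl2) /=.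
    have e : \sum_(t <- x) phi [::] [:: iota (t.1 *: (dv t).1)] =
      \sum_(t <- x) t.1 *: phi [::] [:: iota (dv t).1] by apply: eq_bigr => t _; rewrite (klinZ hl2).
    rewrite e.
    rewrite -!sumrN -!big_split /=.
    rewrite (eq_big_all (G := fun _ => 0) wx) ?big1 // => [[c [X a]]] /= /andP [/eqP sX /eqP sa].
    rewrite (size0nil sX); case: a sa => [|a1 [|]] //= _.
    rewrite {1}(dec_spec Hf a1) (klinD hl) (klin_sum _ _ hl) big_map.
    have D2 : forall o x1 y1, D op phi 2 [:: o] [:: x1; y1] = - phi [::] [:: op o x1 y1].
      by move=> o x1 y1; rewrite /D /= big_cons big_nil /= expr1 scaleN1r addr0.
    rewrite /dv /= scalerDr scaler_sumr.
    have e2 : \sum_(j <- (dec op iota a1).2) (- c) *: D op phi 2 [:: j.1.1] [:: iota j.1.2; j.2] =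
      \sum_(j <- (dec op iota a1).2) c *: phi [::] [:: op j.1.1 (iota j.1.2) j.2].
      by apply: eq_bigr => j _; rewrite D2 scaleNr scalerN opprK.
    by rewrite e2 addrACA !subrr addr0.
- move=> v y wy Htz.
  have [pi [pil [piv pio]]] := proj_ex Hf.
  have ML : multilinear_n 1 (fun (X : seq cube3) (a : seq A) => pi (head 0 a)).
    move=> X [|? ?] [|? ?] c x y' _ //= _; exact: pil.
  have := Htz V _ ML.
  rewrite eval_cat eval_fneg eval_dfsum /eval_fsum big_cons big_nil /= scale1r addr0 piv.
  rewrite big1 ?oppr0 ?addr0 // => t _.
  by rewrite /D /= big_cons big_nil /= take0 /= pio scaler0 addr0 scaler0.
- move=> n hn x wx Hz.
  pose hterm (t : K * (seq cube3 * seq A)) : fsum A :=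
    match t.2.2 with
    | a1 :: ar => [seq (- t.1, (s.1.1 :: t.2.1, iota s.1.2 :: s.2 :: ar)) | s <- (dec op iota a1).2]
    | [::] => [::] end.
  exists (flatten (map hterm x)); split.
  + apply: (all_flatten_map wx) => [[c [X a]]] /= /andP [/eqP sX /eqP sa].
    case: a sa => [|a1 ar] //= sa; rewrite /hterm /=.
    elim: (dec op iota a1).2 => //= s l ->; rewrite andbT /= sX.
    by apply/andP; split; apply/eqP; lia.
  + move=> W phi Hml.
    have := Hz W (Psi op iota phi) (Psi_ml Hf Hml hn); rewrite eval_dfsum => <-.
    rewrite eval_cat eval_fneg eval_dfsum sum_flatten_map /eval_fsum -sumrN -big_split /=.
    apply: (eq_big_all wx) => [[c [X a]]] /= /andP [/eqP sX /eqP sa].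
    case: a sa => [|a1 ar] sa; first by rewrite /= in sa; lia.
    rewrite -(core Hf Hml hn sX sa) /= big_map scalerDr scaler_sumr -sumrN.
    congr (_ + _); apply: eq_bigr => s _ /=.
    by rewrite scaleNr opprK.
Qed.
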